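(* Consider the energy-harvesting model described in the context, with parameters $p\in(0,1)$, $\gamma>0$, $B>0$, $w\in\mathbb{N}$. Let $\pi^*(w)$ be an optimal look-ahead policy of the stationary form described in the context, with induced sequence $(\xi_j^* )_{j\ge1}$. Then $\Gamma^*=\mathcal{T}_\infty(\xi_1^*,\xi_2^*,\dots)$.
   Context: Model: a transmitter sends over an AWGN channel with constant gain $\gamma>0$ in discrete time slots $\tau\in\mathbb{N}$; the reward of sending energy $a$ in a slot is $\frac12\log_2(1+\gamma a)$. The transmitter has a battery of capacity $B>0$. Energy arrivals $E_1,E_2,\dots$ are i.i.d. with $\Pr(E_\tau=B)=p$, $\Pr(E_\tau=0)=1-p$, where $0<p<1$. The battery level satisfies $B_1=B$ (the optimal value does not depend on the initial level) and $B_\tau=\min\{B_{\tau-1}-A_{\tau-1}+E_\tau,\,B\}$, where the action $A_\tau$ (energy spent at time $\tau$) must satisfy $0\le A_\tau\le B_\tau$. The transmitter has look-ahead window $w\in\mathbb{N}$: at time $\tau$ it knows $E_1,\dots,E_{\tau+w}$ (and $B_1$), and a (look-ahead) policy $\pi(w)$ is a sequence of (possibly randomized) action functions $A_\tau=\mathcal{A}_\tau((E_t)_{t=1}^{\tau+w},B_1)$. Its $T$-horizon average throughput is $\Gamma_T^{\pi(w)}=\frac1T\mathbb{E}\sum_{\tau=1}^T\frac12\log_2(1+\gamma A_\tau)$, and $\Gamma^*=\sup_{\pi(w)}\liminf_{T\to\infty}\Gamma_T^{\pi(w)}$. An optimal policy exists that is deterministic, Markovian and stationary; for the Bernoulli arrivals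 it can be taken of the following form: let $d_\tau=\min\{t\in\{1,\dots,w\}:E_{\tau+t}=B\}$ if this set is nonempty and $d_\tau=0$ otherwise; then $a_\tau=b_\tau/d_\tau$ if $d_\tau\neq0$, and $a_\tau=\mathcal{A}(b_\tau)$ if $d_\tau=0$, for some fixed function $\mathcal{A}$ with $0\le\mathcal{A}(b)\le b$. The sequence induced by such a policy is $\xi_j^*=\mathcal{A}(b_j)$, where $b_1=B$ and $b_{j+1}=b_j-\xi_j^*$. A nonnegative sequence $(x_j)_{j\ge1}$ is admissible if $\sum_j x_j\le B$. For an admissible sequence, $$\mathcal{T}_\infty(x_1,x_2,\dots)=\sum_{k=1}^{w}p^2(1-p)^{k-1}\frac{k}{2}\log_2\!\Big(1+\gamma\frac{B}{k}\Big)+\sum_{j=1}^{\infty}p(1-p)^{j+w-1}\frac12\log_2(1+\gamma x_j)+\sum_{k=1}^{\infty}p^2(1-p)^{k+w-1}\frac{w}{2}\log_2\!\Big(1+\gamma\frac{B-\sum_{j=1}^{k}x_j}{w}\Big).$$ *)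

(* Defs.v *)
From Stdlib Require Import Reals Lra Arith.
From Coquelicot Require Import Coquelicot.
Open Scope R_scope.

Definition log2 (x : R) : R := ln x / ln 2.

Definition rate (g a : R) : R := / 2 * log2 (1 + g * a).

Fixpoint fsum (f : nat -> R) (n : nat) : R :=
  match n with
  | O => 0
  | S m => fsum f m + f (S m)
  end.

(* An arrival realisation is e : nat -> bool, with e t = true iff E_t = B
   (time slots t >= 1; coordinate 0 is unused). *)
Definition energy (B : R) (e : nat -> bool) (t : nat) : R :=
  if e t then B else 0.

Definition upd (e : nat -> bool) (k : nat) (b : bool) : nat -> bool :=
  fun t => if Nat.eqb t k then b else e t.

(* Expectation, under i.i.d. Bernoulli(p) arrivals, of a functional f of the
   arrival sequence that depends only on E_1, ..., E_N: the coordinates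
   1..N are integrated out one by one (exact finite expectation). *)
Fixpoint expect (p : R) (N : nat) (f : (nat -> bool) -> R) : R :=
  match N with
  | O => f (fun _ => false)
  | S n => p * expect p n (fun e => f (upd e (S n) true))
           + (1 - p) * expect p n (fun e => f (upd e (S n) false))
  end.

(* A (deterministic) policy: pol tau e = A_tau, for tau >= 1. *)
Definition policy := nat -> (nat -> bool) -> R.

Fixpoint battery (B : R) (pol : policy) (e : nat -> bool) (tau : nat) : R :=
  match tau with
  | O => B
  | S n => match n with
           | O => B
           | _ => Rmin (battery B pol e n - pol n e + energy B e (S n)) B
           end
  end.

Definition is_policy (B : R) (w : nat) (pol : policy) : Prop :=
  (forall tau e e', (1 <= tau)%nat ->
      (forall t, (1 <= t <= tau + w)%nat -> e t = e' t) ->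
      pol tau e = pol tau e')
  /\ (forall tau e, (1 <= tau)%nat ->
      0 <= pol tau e <= battery B pol e tau).

(* T-horizon average throughput Gamma_T^pi.  The summand depends only on
   E_1..E_{T+w}, so its expectation is the finite expectation over these. *)
Definition throughput (p g : R) (w : nat) (pol : policy) (T : nat) : R :=
  / INR T * expect p (T + w) (fun e => fsum (fun tau => rate g (pol tau e)) T).

Definition Gamma_star (p g B : R) (w : nat) : Rbar :=
  Lub_Rbar (fun x => exists pol, is_policy B w pol /\
     LimInf_seq (fun n => throughput p g w pol (S n)) = Finite x).

(* d_tau = min { t in 1..w : E_{tau+t} = B }, or 0 if empty *)
Fixpoint find_arr (e : nat -> bool) (tau t n : nat) : nat :=
  match n with
  | O => O
  | S n' => if e (tau + t)%nat then t else find_arr e tau (S t) n'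
  end.
Definition dist (w : nat) (e : nat -> bool) (tau : nat) : nat :=
  find_arr e tau 1 w.

Definition stat_action (A : R -> R) (w : nat) (e : nat -> bool) (tau : nat)
  (b : R) : R :=
  match dist w e tau with
  | O => A b
  | d => b / INR d
  end.

Fixpoint stat_battery (B : R) (w : nat) (A : R -> R) (e : nat -> bool)
  (tau : nat) : R :=
  match tau with
  | O => B
  | S n => match n with
           | O => B
           | _ => Rmin (stat_battery B w A e n
                        - stat_action A w e n (stat_battery B w A e n)
                        + energy B e (S n)) B
           end
  end.

Definition stat_policy (B : R) (w : nat) (A : R -> R) : policy :=
  fun tau e => stat_action A w e tau (stat_battery B w A e tau).

Fixpoint xib (B : R) (A : R -> R) (j : nat) : R :=
  match j with
  | O => B
  | S n => match n with
           | O => B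
           | _ => xib B A n - A (xib B A n)
           end
  end.
Definition xi (B : R) (A : R -> R) (j : nat) : R := A (xib B A j).

(* T_infinity(x_1, x_2, ...), x indexed from 1 (x 0 unused) *)
Definition T_inf (p g B : R) (w : nat) (x : nat -> R) : R :=
  fsum (fun k => p ^ 2 * (1 - p) ^ (k - 1) * (INR k / 2)
                 * log2 (1 + g * (B / INR k))) w
  + Series (fun n => p * (1 - p) ^ (S n + w - 1) * (/ 2 * log2 (1 + g * x (S n))))
  + Series (fun n => p ^ 2 * (1 - p) ^ (S n + w - 1) * (INR w / 2)
                 * log2 (1 + g * ((B - fsum x (S n)) / INR w))).

(* Main.v *)
Require Import Defs.
From Stdlib Require Import Reals Lra Lia Arith.
From Coquelicot Require Import Coquelicot.
Open Scope R_scope.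
Notation dist := Defs.dist.

Definition dep (lo hi : nat) (f : (nat -> bool) -> R) : Prop :=
  forall e e', (forall t, (lo < t <= hi)%nat -> e t = e' t) -> f e = f e'.

Lemma expect_ext p N f g : (forall e, f e = g e) -> expect p N f = expect p N g.
Proof.
  revert f g; induction N as [|N IH]; intros f g H; simpl.
  - apply H.
  - rewrite (IH (fun e => f (upd e (S N) true)) (fun e => g (upd e (S N) true))) by (intro; apply H).
    rewrite (IH (fun e => f (upd e (S N) false)) (fun e => g (upd e (S N) false))) by (intro; apply H). reflexivity.
Qed.

Lemma expect_const p N c : expect p N (fun _ => c) = c.
Proof. induction N; simpl; [reflexivity| rewrite IHN; ring]. Qed.

Lemma expect_plus p N f g :
  expect p N (fun e => f e + g e) = expect p N f + expect p N g.
Proof.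
  revert f g; induction N as [|N IH]; intros f g; simpl; [reflexivity|].
  rewrite (IH (fun e => f (upd e (S N) true))), (IH (fun e => f (upd e (S N) false))). ring.
Qed.

Lemma expect_scal p N c f :
  expect p N (fun e => c * f e) = c * expect p N f.
Proof.
  revert f; induction N as [|N IH]; intros f; simpl; [reflexivity|].
  rewrite (IH (fun e => f (upd e (S N) true))), (IH (fun e => f (upd e (S N) false))). ring.
Qed.

Lemma expect_fsum p N (F : nat -> (nat -> bool) -> R) n :
  expect p N (fun e => fsum (fun k => F k e) n) = fsum (fun k => expect p N (F k)) n.
Proof.
  induction n; simpl. apply expect_const.
  rewrite expect_plus, IHn. reflexivity.
Qed.

Lemma expect_sumf p N (F : nat -> (nat -> bool) -> R) n :
  expect p N (fun e => sum_f_R0 (fun k => F k e) n) = sum_f_R0 (fun k => expect p N (F k)) n.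
Proof.
  induction n; simpl. reflexivity.
  rewrite expect_plus, IHn. reflexivity.
Qed.

Lemma upd_eq e k b : upd e k b k = b.
Proof. unfold upd. rewrite Nat.eqb_refl. reflexivity. Qed.
Lemma upd_neq e k b t : t <> k -> upd e k b t = e t.
Proof. intros H. unfold upd. apply Nat.eqb_neq in H. rewrite H. reflexivity. Qed.

Lemma dep_upd lo hi f b : (lo <= hi)%nat -> dep lo (S hi) f ->
  dep lo hi (fun e => f (upd e (S hi) b)).
Proof.
  intros Hl H e e' He. apply H. intros t Ht.
  destruct (Nat.eq_dec t (S hi)) as [->|Hn]. rewrite !upd_eq; reflexivity.
  rewrite !upd_neq by exact Hn. apply He. lia.
Qed.


Lemma expect_extend p N k f : dep 0 N f -> expect p (k + N) f = expect p N f.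
Proof.
  intros H. induction k as [|k IH]; [reflexivity|].
  simpl (S k + N)%nat. simpl.
  rewrite (expect_ext p _ (fun e => f (upd e (S (k + N)) true)) f).
  rewrite (expect_ext p _ (fun e => f (upd e (S (k + N)) false)) f).
  rewrite IH. ring.
  all: intros e; apply H; intros t Ht; rewrite upd_neq; [reflexivity| lia].
Qed.

Lemma expect_extend' p N M f : (N <= M)%nat -> dep 0 N f -> expect p M f = expect p N f.
Proof.
  intros HM H. replace M with ((M - N) + N)%nat by lia. apply expect_extend, H.
Qed.

Lemma dep_const_val a f : dep a a f -> forall e, f e = f (fun _ => false).
Proof. intros H e. apply H. intros; lia. Qed.

Lemma expect_prod_aux p a f : dep 0 a f -> forall k g, dep a (k + a) g ->
  expect p (k + a) (fun e => f e * g e) = expect p a f * expect p (k + a) g.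
Proof.
  intros Hf k. induction k as [|k IH]; intros g Hg.
  - simpl. rewrite (expect_ext p a _ (fun e => g (fun _ => false) * f e)).
    rewrite expect_scal, (expect_ext p a g (fun _ => g (fun _ => false))), expect_const. ring.
    apply (dep_const_val a g Hg).
    intro e. rewrite (dep_const_val a g Hg e). ring.
  - simpl (S k + a)%nat. simpl.
    rewrite (expect_ext p _ (fun e => f (upd e (S (k + a)) true) * g (upd e (S (k + a)) true))
                             (fun e => f e * g (upd e (S (k + a)) true))).
    rewrite (expect_ext p _ (fun e => f (upd e (S (k + a)) false) * g (upd e (S (k + a)) false))
                             (fun e => f e * g (upd e (S (k + a)) false))).
    rewrite !IH. ring.
    all: try (apply dep_upd; [lia| exact Hg]).
    all: try (apply (dep_upd a (k+a) g); [lia| exact Hg]).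
    all: intros e; f_equal; apply Hf; intros t Ht; rewrite upd_neq; [reflexivity| lia].
Qed.

Lemma expect_prod p a N f g : (a <= N)%nat -> dep 0 a f -> dep a N g ->
  expect p N (fun e => f e * g e) = expect p N f * expect p N g.
Proof.
  intros HN Hf Hg. assert (E : N = ((N - a) + a)%nat) by lia.
  rewrite E in Hg |- *.
  rewrite (expect_prod_aux p a f Hf (N - a) g Hg). rewrite (expect_extend p a (N - a) f Hf). reflexivity.
Qed.

Definition ind (b : bool) : R := if b then 1 else 0.

Lemma expect_coord p N j : (1 <= j <= N)%nat -> expect p N (fun e => ind (e j)) = p.
Proof.
  intros Hj. rewrite (expect_extend' p j N) by (lia || (intros e e' H; rewrite (H j) by lia; reflexivity)).
  destruct j as [|j]; [lia|]. simpl. unfold upd. rewrite Nat.eqb_refl. simpl.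
  rewrite !expect_const. ring.
Qed.

Definition sh (k : nat) : nat := match k with O => O | S k' => S (S k') end.

Lemma fa_shift e n : forall t tau, (1 <= t)%nat ->
  find_arr e tau (S t) n = sh (find_arr e (S tau) t n).
Proof.
  induction n as [|n IH]; intros t tau Ht; [reflexivity|].
  change (find_arr e tau (S t) (S n)) with
    (if e (tau + S t)%nat then S t else find_arr e tau (S (S t)) n).
  change (find_arr e (S tau) t (S n)) with
    (if e (S tau + t)%nat then t else find_arr e (S tau) (S t) n).
  replace (tau + S t)%nat with (S tau + t)%nat by lia.
  destruct (e (S tau + t)%nat).
  - destruct t; [lia|reflexivity].
  - apply IH. lia.
Qed.

Lemma dist_S e n tau :
  dist (S n) e tau = if e (S tau) then 1%nat else sh (dist n e (S tau)).
Proof.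
  unfold dist. simpl. replace (tau + 1)%nat with (S tau) by lia.
  destruct (e (S tau)); [reflexivity|]. apply fa_shift. lia.
Qed.

Lemma fa_ext e n : forall t tau, (1 <= t)%nat ->
  find_arr e tau t (S n) =
  match find_arr e tau t n with O => if e (tau + (t + n))%nat then (t + n)%nat else O | k => k end.
Proof.
  induction n as [|n IH]; intros t tau Ht.
  - simpl. rewrite Nat.add_0_r. destruct (e (tau + t)%nat); reflexivity.
  - change (find_arr e tau t (S (S n))) with
      (if e (tau + t)%nat then t else find_arr e tau (S t) (S n)).
    rewrite IH by lia. simpl. destruct (e (tau + t)%nat); [destruct t; [lia|reflexivity]|].
    replace (t + S n)%nat with (S (t + n))%nat by lia. reflexivity.
Qed.

Lemma fa_range e n : forall t tau,
  find_arr e tau t n = O \/ (t <= find_arr e tau t n < t + n)%nat.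
Proof.
  induction n as [|n IH]; intros t tau; simpl; [left; reflexivity|].
  destruct (e (tau + t)%nat). right; lia.
  destruct (IH (S t) tau) as [H|H]; [left; exact H| right; lia].
Qed.

Lemma dist_range e n tau : dist n e tau = O \/ (1 <= dist n e tau <= n)%nat.
Proof. unfold dist. destruct (fa_range e n 1 tau); [left|right]; lia. Qed.

Lemma fa_dep e e' n : forall t tau,
  (forall s, (tau + t <= s < tau + t + n)%nat -> e s = e' s) ->
  find_arr e tau t n = find_arr e' tau t n.
Proof.
  induction n as [|n IH]; intros t tau H; simpl; [reflexivity|].
  rewrite (H (tau + t)%nat) by lia. destruct (e' (tau + t)%nat); [reflexivity|].
  apply IH. intros s Hs. apply H. lia.
Qed.

Lemma dist_dep n tau (F : nat -> R) N : (tau + n <= N)%nat ->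
  dep tau N (fun e => F (dist n e tau)).
Proof.
  intros HN e e' H. unfold dist. rewrite (fa_dep e e' n 1 tau); [reflexivity|].
  intros s Hs. apply H. lia.
Qed.

Lemma expect_ind_mul p N j h : (1 <= j <= N)%nat -> dep j N h ->
  expect p N (fun e => ind (e j) * h e) = p * expect p N h.
Proof.
  intros Hj Hh. rewrite (expect_prod p j N (fun e => ind (e j)) h); [|lia| |exact Hh].
  rewrite expect_coord by lia. reflexivity.
  intros e e' H. rewrite (H j) by lia. reflexivity.
Qed.

Lemma expect_nind_mul p N j h : (1 <= j <= N)%nat -> dep j N h ->
  expect p N (fun e => (1 - ind (e j)) * h e) = (1 - p) * expect p N h.
Proof.
  intros Hj Hh.
  rewrite (expect_ext p N _ (fun e => h e + (-1) * (ind (e j) * h e))) by (intro; ring).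
  rewrite expect_plus, expect_scal, expect_ind_mul by assumption. ring.
Qed.

Definition Pd (p : R) (n d : nat) : R :=
  match d with
  | O => (1 - p) ^ n
  | S d' => if Nat.leb d n then p * (1 - p) ^ d' else 0
  end.

Definition eqi (a b : nat) : R := ind (Nat.eqb a b).

Lemma expect_dist p n : forall tau N d, (tau + n <= N)%nat ->
  expect p N (fun e => eqi (dist n e tau) d) = Pd p n d.
Proof.
  induction n as [|n IH]; intros tau N d HN.
  - unfold Defs.dist; simpl. rewrite expect_const. destruct d; reflexivity.
  - assert (Hd : forall h : nat -> R, dep (S tau) N (fun e => h (dist n e (S tau)))).
    { intros h. apply dist_dep. lia. }
    destruct d as [|[|d]].
    + rewrite (expect_ext p N _ (fun e => (1 - ind (e (S tau))) * eqi (dist n e (S tau)) 0)).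
      rewrite expect_nind_mul; [|lia|exact (Hd (fun k => eqi k 0))].
      rewrite IH by lia. simpl. ring.
      intros e. rewrite dist_S. unfold eqi. destruct (e (S tau)); simpl. ring.
      destruct (dist n e (S tau)); simpl; ring.
    + rewrite (expect_ext p N _ (fun e => ind (e (S tau)))).
      rewrite expect_coord by lia. simpl. ring.
      intros e. rewrite dist_S. unfold eqi. destruct (e (S tau)); simpl. reflexivity.
      destruct (dist n e (S tau)); simpl; reflexivity.
    + rewrite (expect_ext p N _ (fun e => (1 - ind (e (S tau))) * eqi (dist n e (S tau)) (S d))).
      rewrite expect_nind_mul; [|lia|exact (Hd (fun k => eqi k (S d)))].
      rewrite IH by lia. simpl.
      destruct n as [|n]; [ring| destruct (d <=? n); ring].
      intros e. rewrite dist_S. unfold eqi. destruct (e (S tau)); simpl. ring.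
      destruct (dist n e (S tau)); simpl; ring.
Qed.

Fixpoint age (e : nat -> bool) (tau : nat) : nat :=
  match tau with
  | O => O
  | S n => match n with
           | O => O
           | _ => if e (S n) then O else S (age e n)
           end
  end.

Definition Binv (B : R) (w : nat) (A : R -> R) (m d : nat) : R :=
  match d with
  | O => xib B A (S m)
  | _ => if Nat.leb (m + d) w then B * INR d / INR (m + d)
         else xib B A (m + d - w + 1) * INR d / INR w
  end.

Definition Act (B : R) (w : nat) (A : R -> R) (m d : nat) : R :=
  match d with
  | O => A (xib B A (S m))
  | _ => if Nat.leb (m + d) w then B / INR (m + d)
         else xib B A (m + d - w + 1) / INR w
  end.

Lemma INR_pos n : (1 <= n)%nat -> 0 < INR n.
Proof. intros H. apply lt_0_INR. lia. Qed.

Section S.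
Variables (B : R) (w : nat) (A : R -> R).
Hypothesis HB : 0 < B.
Hypothesis Hw : (1 <= w)%nat.
Hypothesis HA : forall b, 0 <= b <= B -> 0 <= A b <= b.

Lemma xib_bounds j : 0 <= xib B A j <= B.
Proof.
  induction j as [|j IH]; simpl; [lra|].
  destruct j as [|j]; [lra|].
  destruct (HA _ IH). lra.
Qed.

Lemma xib_SS j : xib B A (S (S j)) = xib B A (S j) - A (xib B A (S j)).
Proof. reflexivity. Qed.


Lemma INR_le1 a b : (a <= b)%nat -> INR a <= INR b.
Proof. apply le_INR. Qed.

Lemma Binv_bounds m d : (d <= w)%nat -> 0 <= Binv B w A m d <= B.
Proof.
  intros Hd. unfold Binv. destruct d as [|d]. apply xib_bounds.
  destruct (Nat.leb_spec (m + S d) w).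
  - assert (0 < INR (m + S d)) by (apply INR_pos; lia).
    assert (INR (S d) <= INR (m + S d)) by (apply le_INR; lia).
    assert (0 < INR (S d)) by (apply INR_pos; lia).
    split. apply Rmult_le_pos; [apply Rmult_le_pos|]; try lra. left; apply Rinv_0_lt_compat; lra.
    apply (Rmult_le_reg_r (INR (m + S d))); [lra|]. unfold Rdiv. rewrite Rmult_assoc, Rinv_l by lra.
    rewrite Rmult_1_r. apply Rmult_le_compat_l; lra.
  - assert (0 < INR w) by (apply INR_pos; lia).
    assert (INR (S d) <= INR w) by (apply le_INR; lia).
    assert (0 < INR (S d)) by (apply INR_pos; lia).
    pose proof (xib_bounds (m + S d - w + 1)).
    split. apply Rmult_le_pos; [apply Rmult_le_pos|]; try lra. left; apply Rinv_0_lt_compat; lra.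
    apply (Rmult_le_reg_r (INR w)); [lra|]. unfold Rdiv. rewrite Rmult_assoc, Rinv_l by lra.
    rewrite Rmult_1_r. apply Rmult_le_compat; lra.
Qed.

Lemma Act_Binv e tau : stat_action A w e tau (Binv B w A (age e tau) (dist w e tau))
  = Act B w A (age e tau) (dist w e tau).
Proof.
  unfold stat_action, Binv, Act. destruct (dist w e tau) as [|d]; [reflexivity|].
  assert (0 < INR (S d)) by (apply INR_pos; lia).
  destruct (Nat.leb_spec (age e tau + S d) w).
  - assert (0 < INR (age e tau + S d)) by (apply INR_pos; lia). field. lra.
  - assert (0 < INR w) by (apply INR_pos; lia). field. lra.
Qed.

Lemma battery_inv e tau : (1 <= tau)%nat ->
  stat_battery B w A e tau = Binv B w A (age e tau) (dist w e tau).
Proof.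
  induction tau as [|n IH]; intros Htau; [lia|].
  destruct n as [|n].
  - simpl. unfold Binv. destruct (dist w e 1) as [|d] eqn:Ed; [reflexivity|].
    destruct (dist_range e w 1) as [H|H]; rewrite Ed in H; [lia|].
    simpl (0 + S d)%nat. replace (Nat.leb (S d) w) with true by (symmetry; apply Nat.leb_le; lia).
    assert (0 < INR (S d)) by (apply INR_pos; lia). field. lra.
  - specialize (IH ltac:(lia)).
    change (stat_battery B w A e (S (S n))) with
      (Rmin (stat_battery B w A e (S n) - stat_action A w e (S n) (stat_battery B w A e (S n))
             + energy B e (S (S n))) B).
    rewrite IH, Act_Binv.
    assert (Hb := Binv_bounds (age e (S n)) (dist w e (S n))).
    specialize (Hb ltac:(destruct (dist_range e w (S n)); lia)).
    assert (Ha : 0 <= Act B w A (age e (S n)) (dist w e (S n)) <= Binv B w A (age e (S n)) (dist w e (S n))).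
    { rewrite <- Act_Binv. unfold stat_action. destruct (dist w e (S n)) as [|d].
      apply HA; exact Hb.
      assert (1 <= INR (S d)) by (apply (le_INR 1); lia).
      split. apply Rmult_le_pos; [lra|]. left; apply Rinv_0_lt_compat; lra.
      unfold Rdiv. rewrite <- (Rmult_1_r (Binv _ _ _ _ _)) at 2. apply Rmult_le_compat_l; [lra|].
      rewrite <- Rinv_1. apply Rinv_le_contravar; lra. }
    set (m := age e (S n)) in *. set (d := dist w e (S n)) in *.
    change (age e (S (S n))) with (if e (S (S n)) then O else S (age e (S n))). fold m.
    unfold energy. destruct (e (S (S n))) eqn:Ee.
    + rewrite Rmin_right by lra.
      destruct (dist_range e w (S (S n))) as [H2|H2].
      * rewrite H2. reflexivity.
      * unfold Binv. destruct (dist w e (S (S n))) as [|d'] eqn:Ed'; [reflexivity|].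
        simpl (0 + S d')%nat. replace (Nat.leb (S d') w) with true by (symmetry; apply Nat.leb_le; lia).
        assert (0 < INR (S d')) by (apply INR_pos; lia). field. lra.
    + rewrite Rplus_0_r, Rmin_left by lra.
      destruct w as [|w']; [lia|].
      assert (Ed : d = sh (dist w' e (S (S n)))).
      { unfold d. rewrite dist_S, Ee. reflexivity. }
      assert (Ed' : dist (S w') e (S (S n)) =
         match dist w' e (S (S n)) with O => if e (S (S n) + (1 + w'))%nat then (1 + w')%nat else O | k => k end).
      { unfold Defs.dist. apply fa_ext. lia. }
      rewrite Ed'. rewrite Ed in *. clear Ed Ed'.
      destruct (dist w' e (S (S n))) as [|k] eqn:Ek.
      * destruct (e (S (S n) + (1 + w'))%nat) eqn:Ef.
        -- cbv [sh Binv Act].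
           replace (Nat.leb (S m + (1 + w')) (S w')) with false by (symmetry; apply Nat.leb_gt; lia).
           replace (S m + (1 + w') - S w' + 1)%nat with (S (S m)) by lia.
           rewrite xib_SS. replace (1 + w')%nat with (S w') by lia.
           assert (0 < INR (S w')) by (apply INR_pos; lia). field. lra.
        -- cbv [sh Binv Act]. rewrite xib_SS. reflexivity.
      * cbv [sh Binv Act].
        replace (m + S (S k))%nat with (S m + S k)%nat by lia.
        destruct (Nat.leb_spec (S m + S k) (S w')).
        -- assert (0 < INR (S m + S k)) by (apply INR_pos; lia).
           rewrite (S_INR (S k)). field. lra.
        -- assert (0 < INR (S w')) by (apply INR_pos; lia).
           rewrite (S_INR (S k)). field. lra.
Qed.

Lemma policy_act e tau : (1 <= tau)%nat ->
  stat_policy B w A tau e = Act B w A (age e tau) (dist w e tau).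
Proof.
  intros H. unfold stat_policy. rewrite battery_inv by exact H. apply Act_Binv.
Qed.

Lemma Act_bounds m d : (d <= w)%nat -> 0 <= Act B w A m d <= B.
Proof.
  intros Hd. unfold Act. destruct d as [|d].
  pose proof (xib_bounds (S m)). destruct (HA _ H). lra.
  destruct (Nat.leb_spec (m + S d) w).
  - assert (1 <= INR (m + S d)) by (apply (le_INR 1); lia).
    split. apply Rmult_le_pos; [lra|]. left; apply Rinv_0_lt_compat; lra.
    unfold Rdiv. rewrite <- (Rmult_1_r B) at 2. apply Rmult_le_compat_l; [lra|].
    rewrite <- Rinv_1. apply Rinv_le_contravar; lra.
  - assert (1 <= INR w) by (apply (le_INR 1); lia).
    pose proof (xib_bounds (m + S d - w + 1)).
    split. apply Rmult_le_pos; [lra|]. left; apply Rinv_0_lt_compat; lra.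
    apply Rle_trans with (xib B A (m + S d - w + 1)); [|lra].
    unfold Rdiv. rewrite <- (Rmult_1_r (xib B A (m + S d - w + 1))) at 2.
    apply Rmult_le_compat_l; [lra|].
    rewrite <- Rinv_1. apply Rinv_le_contravar; lra.
Qed.
End S.

Lemma age_dep e e' tau : (forall t, (0 < t <= tau)%nat -> e t = e' t) -> age e tau = age e' tau.
Proof.
  induction tau as [|n IH]; intros H; [reflexivity|].
  destruct n as [|n]; [reflexivity|].
  change (age e (S (S n))) with (if e (S (S n)) then O else S (age e (S n))).
  change (age e' (S (S n))) with (if e' (S (S n)) then O else S (age e' (S n))).
  rewrite (H (S (S n))) by lia. rewrite IH by (intros; apply H; lia). reflexivity.
Qed.

Fixpoint agesum (p : R) (tau : nat) (phi : nat -> R) : R :=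
  match tau with
  | O => phi O
  | S n => match n with
           | O => phi O
           | _ => p * phi O + (1 - p) * agesum p n (fun m => phi (S m))
           end
  end.

Lemma expect_age p tau : (1 <= tau)%nat -> forall N phi, (tau <= N)%nat ->
  expect p N (fun e => phi (age e tau)) = agesum p tau phi.
Proof.
  induction tau as [|n IH]; intros Ht N phi HN; [lia|].
  destruct n as [|n].
  - simpl. apply expect_const.
  - rewrite (expect_ext p N _ (fun e => phi O * ind (e (S (S n)))
        + phi (S (age e (S n))) * (1 - ind (e (S (S n)))))).
    2:{ intros e. change (age e (S (S n))) with (if e (S (S n)) then O else S (age e (S n))).
        destruct (e (S (S n))); simpl; ring. }
    rewrite expect_plus, expect_scal, expect_coord by lia.
    rewrite (expect_prod p (S n) N (fun e => phi (S (age e (S n)))) (fun e => 1 - ind (e (S (S n))))).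
    + rewrite (IH ltac:(lia) N (fun m => phi (S m))) by lia.
      rewrite (expect_ext p N _ (fun e => 1 + (-1) * ind (e (S (S n))))) by (intros; ring).
      rewrite expect_plus, expect_scal, expect_const, expect_coord by lia.
      change (agesum p (S (S n)) phi) with (p * phi O + (1 - p) * agesum p (S n) (fun m => phi (S m))).
      ring.
    + lia.
    + intros e e' H. rewrite (age_dep e e' (S n)); [reflexivity|]. intros; apply H; lia.
    + intros e e' H. rewrite (H (S (S n))) by lia. reflexivity.
Qed.

Lemma sum_eqi k n (h : nat -> R) :
  sum_f_R0 (fun d => h d * eqi k d) n = if Nat.leb k n then h k else 0.
Proof.
  induction n as [|n IH].
  - simpl. unfold eqi, ind. destruct k; simpl; ring.
  - simpl. rewrite IH. unfold eqi, ind.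
    destruct (Nat.leb_spec k n); destruct (Nat.leb_spec k (S n)); try lia.
    + replace (Nat.eqb k (S n)) with false by (symmetry; apply Nat.eqb_neq; lia). ring.
    + assert (k = S n) by lia. subst. rewrite Nat.eqb_refl. ring.
    + replace (Nat.eqb k (S n)) with false by (symmetry; apply Nat.eqb_neq; lia). ring.
Qed.

Lemma fsum_ext f h n : (forall k, (1 <= k <= n)%nat -> f k = h k) -> fsum f n = fsum h n.
Proof.
  induction n as [|n IH]; intros H; simpl; [reflexivity|].
  rewrite IH by (intros; apply H; lia). rewrite H by lia. reflexivity.
Qed.

Section S.
Variables (p g B : R) (w : nat) (A : R -> R).
Hypothesis Hp : 0 < p < 1.
Hypothesis Hg : 0 < g.
Hypothesis HB : 0 < B.
Hypothesis Hw : (1 <= w)%nat.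
Hypothesis HA : forall b, 0 <= b <= B -> 0 <= A b <= b.

Definition F (m d : nat) : R := rate g (Act B w A m d).

Definition U (tau : nat) : R :=
  sum_f_R0 (fun d => agesum p tau (fun m => F m d) * Pd p w d) w.

Lemma expect_reward tau N : (1 <= tau)%nat -> (tau + w <= N)%nat ->
  expect p N (fun e => rate g (stat_policy B w A tau e)) = U tau.
Proof.
  intros Ht HN.
  rewrite (expect_ext p N _ (fun e => sum_f_R0 (fun d => F (age e tau) d * eqi (dist w e tau) d) w)).
  2:{ intros e. rewrite sum_eqi. rewrite policy_act by assumption.
      destruct (Nat.leb_spec (dist w e tau) w); [reflexivity|].
      destruct (dist_range e w tau); lia. }
  rewrite expect_sumf. unfold U. apply sum_eq. intros d Hd.
  rewrite (expect_prod p tau N (fun e => F (age e tau) d) (fun e => eqi (dist w e tau) d)).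
  - rewrite (expect_age p tau Ht N (fun m => F m d)) by lia.
    rewrite expect_dist by lia. reflexivity.
  - lia.
  - intros e e' H. rewrite (age_dep e e' tau); [reflexivity|]. intros; apply H; lia.
  - apply (dist_dep w tau (fun k => eqi k d)). lia.
Qed.

Lemma fsum_sumf f n : fsum f (S n) = sum_f_R0 (fun k => f (S k)) n.
Proof.
  induction n as [|n IH]. simpl. ring.
  change (fsum f (S (S n))) with (fsum f (S n) + f (S (S n))). rewrite IH. reflexivity.
Qed.

Lemma throughput_eq n :
  throughput p g w (stat_policy B w A) (S n) = sum_f_R0 (fun k => U (S k)) n / INR (S n).
Proof.
  unfold throughput. rewrite expect_fsum.
  rewrite (fsum_ext _ U). rewrite fsum_sumf. unfold Rdiv. ring.
  intros k Hk. apply expect_reward; lia.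
Qed.

End S.

Section S.
Variable p : R.
Hypothesis Hp : 0 < p < 1.

Definition Sser (phi : nat -> R) : R := Series (fun m => p * (1 - p) ^ m * phi m).

Lemma geom_ex : ex_series (fun m => (1 - p) ^ m).
Proof. apply ex_series_geom. rewrite Rabs_pos_eq; lra. Qed.

Lemma ex_series_bnd phi C : (forall m, Rabs (phi m) <= C) ->
  ex_series (fun m => p * (1 - p) ^ m * phi m).
Proof.
  intros H. apply (@ex_series_le R_AbsRing R_CompleteNormedModule _ (fun m => C * p * (1 - p) ^ m)).
  - intros m. change norm with Rabs. simpl. rewrite !Rabs_mult.
    rewrite (Rabs_pos_eq p) by lra. rewrite (Rabs_pos_eq ((1-p)^m)) by (apply pow_le; lra).
    specialize (H m). assert (0 <= (1-p)^m) by (apply pow_le; lra).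
    replace (C * p * (1 - p) ^ m) with ((p * (1 - p) ^ m) * C) by ring.
    apply Rmult_le_compat_l. apply Rmult_le_pos; lra. exact H.
  - apply (ex_series_ext (fun m => scal (C * p) ((1 - p) ^ m))).
    intros; reflexivity. apply (@ex_series_scal_l R_AbsRing R_NormedModule), geom_ex.
Qed.

Lemma Sser_rec phi C : (forall m, Rabs (phi m) <= C) ->
  Sser phi = p * phi O + (1 - p) * Sser (fun m => phi (S m)).
Proof.
  intros H. unfold Sser. rewrite Series_incr_1 by (eapply ex_series_bnd; eauto).
  rewrite <- Series_scal_l. simpl pow. rewrite Rmult_1_r. f_equal.
  apply Series_ext. intros m. simpl. ring.
Qed.

Lemma Sser_bnd phi C : (forall m, Rabs (phi m) <= C) -> Rabs (Sser phi) <= C.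
Proof.
  intros H. unfold Sser.
  assert (Hc : forall m, Rabs (p * (1 - p) ^ m * phi m) <= C * p * (1 - p) ^ m).
  { intros m. rewrite !Rabs_mult.
    rewrite (Rabs_pos_eq p) by lra. rewrite (Rabs_pos_eq ((1-p)^m)) by (apply pow_le; lra).
    specialize (H m). replace (C * p * (1 - p) ^ m) with ((p * (1 - p) ^ m) * C) by ring.
    apply Rmult_le_compat_l. apply Rmult_le_pos; [lra| apply pow_le; lra]. exact H. }
  assert (Hex : ex_series (fun m => C * p * (1 - p) ^ m)).
  { apply (ex_series_ext (fun m => scal (C * p) ((1 - p) ^ m))).
    intros; reflexivity. apply (@ex_series_scal_l R_AbsRing R_NormedModule), geom_ex. }
  eapply Rle_trans. apply Series_Rabs.
  apply (@ex_series_le R_AbsRing R_CompleteNormedModule _ (fun m => C * p * (1 - p) ^ m)); [|exact Hex].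
  intros m. change norm with Rabs. simpl. rewrite Rabs_pos_eq by apply Rabs_pos. apply Hc.
  eapply Rle_trans. apply Series_le; [|exact Hex]. intros m; split; [apply Rabs_pos| apply Hc].
  rewrite Series_scal_l. rewrite Series_geom by (rewrite Rabs_pos_eq; lra).
  right. field. lra.
Qed.

Lemma agesum_err k : forall phi C, (forall m, Rabs (phi m) <= C) ->
  Rabs (agesum p (S k) phi - Sser phi) <= 2 * C * (1 - p) ^ k.
Proof.
  induction k as [|k IH]; intros phi C H.
  - simpl. pose proof (Sser_bnd phi C H). pose proof (H O).
    eapply Rle_trans. apply Rabs_triang. rewrite Rabs_Ropp. lra.
  - change (agesum p (S (S k)) phi) with (p * phi O + (1 - p) * agesum p (S k) (fun m => phi (S m))).
    rewrite (Sser_rec phi C H).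
    replace (p * phi 0%nat + (1 - p) * agesum p (S k) (fun m : nat => phi (S m)) -
       (p * phi 0%nat + (1 - p) * Sser (fun m : nat => phi (S m))))
      with ((1 - p) * (agesum p (S k) (fun m : nat => phi (S m)) - Sser (fun m : nat => phi (S m)))) by ring.
    rewrite Rabs_mult, Rabs_pos_eq by lra. simpl pow.
    replace (2 * C * ((1 - p) * (1 - p) ^ k)) with ((1 - p) * (2 * C * (1 - p) ^ k)) by ring.
    apply Rmult_le_compat_l; [lra|]. apply IH. intros; apply H.
Qed.

Lemma agesum_lim phi C : (forall m, Rabs (phi m) <= C) ->
  is_lim_seq (fun k => agesum p (S k) phi) (Sser phi).
Proof.
  intros H.
  assert (Hg : is_lim_seq (fun k => 2 * C * (1 - p) ^ k) 0).
  { replace 0 with (2 * C * 0) by ring.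
    apply (is_lim_seq_scal_l _ (2 * C) 0). apply is_lim_seq_geom. rewrite Rabs_pos_eq; lra. }
  apply (is_lim_seq_le_le (fun k => Sser phi - 2 * C * (1 - p) ^ k) _
                          (fun k => Sser phi + 2 * C * (1 - p) ^ k)).
  - intros k. pose proof (agesum_err k phi C H) as E. apply Rabs_le_between in E. lra.
  - replace (Finite (Sser phi)) with (Rbar_minus (Sser phi) 0) by (simpl; f_equal; ring).
    apply is_lim_seq_minus'. apply is_lim_seq_const. exact Hg.
  - replace (Finite (Sser phi)) with (Rbar_plus (Sser phi) 0) by (simpl; f_equal; ring).
    apply is_lim_seq_plus'. apply is_lim_seq_const. exact Hg.
Qed.
End S.

Lemma lim_sumf (u : nat -> nat -> R) (l : nat -> R) n :
  (forall d, (d <= n)%nat -> is_lim_seq (u d) (l d)) ->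
  is_lim_seq (fun k => sum_f_R0 (fun d => u d k) n) (sum_f_R0 l n).
Proof.
  induction n as [|n IH]; intros H; simpl.
  - apply H. lia.
  - apply is_lim_seq_plus'. apply IH. intros; apply H; lia. apply H; lia.
Qed.


Lemma tri_sum (G : nat -> R) V :
  sum_f_R0 (fun d => sum_f_R0 (fun m => G (m + S d)%nat) (V - d)) V
  = fsum (fun k => INR k * G k) (S V).
Proof.
  induction V as [|V IH].
  - simpl. ring.
  - change (sum_f_R0 (fun d => sum_f_R0 (fun m => G (m + S d)%nat) (S V - d)) (S V))
      with (sum_f_R0 (fun d => sum_f_R0 (fun m => G (m + S d)%nat) (S V - d)) V
            + sum_f_R0 (fun m => G (m + S (S V))%nat) (S V - S V)).
    rewrite (sum_eq _ (fun d => sum_f_R0 (fun m => G (m + S d)%nat) (V - d) + G (S (S V)))).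
    + rewrite sum_plus, IH, sum_cte. rewrite Nat.sub_diag. simpl sum_f_R0.
      change (fsum (fun k => INR k * G k) (S (S V))) with
        (fsum (fun k => INR k * G k) (S V) + INR (S (S V)) * G (S (S V))).
      rewrite (S_INR (S V)). simpl (0 + S (S V))%nat. ring.
    + intros d Hd. replace (S V - d)%nat with (S (V - d)) by lia. simpl.
      f_equal. f_equal. lia.
Qed.

Section S.
Variables (p g B : R) (w : nat) (A : R -> R).
Hypothesis Hp : 0 < p < 1.
Hypothesis Hg : 0 < g.
Hypothesis HB : 0 < B.
Hypothesis Hw : (1 <= w)%nat.
Hypothesis HA : forall b, 0 <= b <= B -> 0 <= A b <= b.

Lemma ln2_pos : 0 < ln 2.
Proof. rewrite <- ln_1. apply ln_increasing; lra. Qed.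

Lemma rate_bounds a : 0 <= a <= B -> 0 <= rate g a <= rate g B.
Proof.
  intros Ha. unfold rate, log2. pose proof ln2_pos.
  assert (0 <= ln (1 + g * a)).
  { rewrite <- ln_1. apply ln_le; [lra|]. assert (0 <= g * a) by (apply Rmult_le_pos; lra). lra. }
  assert (ln (1 + g * a) <= ln (1 + g * B)).
  { apply ln_le. assert (0 <= g * a) by (apply Rmult_le_pos; lra). lra.
    assert (g * a <= g * B) by (apply Rmult_le_compat_l; lra). lra. }
  split.
  - apply Rmult_le_pos; [lra|]. unfold Rdiv. apply Rmult_le_pos; [lra|]. left; apply Rinv_0_lt_compat; lra.
  - apply Rmult_le_compat_l; [lra|]. unfold Rdiv. apply Rmult_le_compat_r; [|lra].
    left; apply Rinv_0_lt_compat; lra.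
Qed.

Lemma F_bnd m d : (d <= w)%nat -> Rabs (F g B w A m d) <= rate g B.
Proof.
  intros Hd. unfold F. pose proof (Act_bounds B w A HB Hw HA m d Hd) as H.
  destruct (rate_bounds _ H). rewrite Rabs_pos_eq; lra.
Qed.

Lemma xib_fsum n : B - fsum (xi B A) (S n) = xib B A (S (S n)).
Proof.
  induction n as [|n IH].
  - simpl. unfold xi. simpl. ring.
  - change (fsum (xi B A) (S (S n))) with (fsum (xi B A) (S n) + xi B A (S (S n))).
    change (xib B A (S (S (S n)))) with (xib B A (S (S n)) - A (xib B A (S (S n)))).
    rewrite <- IH. unfold xi at 2. rewrite <- IH. ring.
Qed.

Definition Lval : R := sum_f_R0 (fun d => Sser p (fun m => F g B w A m d) * Pd p w d) w.

Lemma Lval_eq : Lval = T_inf p g B w (xi B A).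
Proof.
  assert (EW : w = S (pred w)) by lia. set (V := pred w) in EW. clearbody V.
  unfold Lval. rewrite EW.
  set (C := rate g B).
  set (G := fun k => p ^ 2 * (1 - p) ^ (k - 1) * rate g (B / INR k)).
  set (Tail := Series (fun k => p ^ 2 * (1 - p) ^ (S V + k) * rate g (xib B A (S (S k)) / INR (S V)))).
  assert (Hterm : forall i, (i <= V)%nat ->
    Sser p (fun m => F g B (S V) A m (S i)) * Pd p (S V) (S i)
    = sum_f_R0 (fun m => G (m + S i)%nat) (V - i) + Tail).
  { intros i Hi. unfold Pd. replace (Nat.leb (S i) (S V)) with true by (symmetry; apply Nat.leb_le; lia).
    unfold Sser. rewrite (Series_incr_n _ (S V - i)).
    2: lia.
    2: { apply (ex_series_bnd p Hp _ C). intros m. rewrite <- EW. apply F_bnd. lia. }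
    replace (Init.Nat.pred (S V - i)) with (V - i)%nat by lia.
    rewrite Rmult_plus_distr_r. f_equal.
    - rewrite (Rmult_comm _ (p * (1 - p) ^ i)), scal_sum. apply sum_eq. intros m Hm.
      unfold G, F, Act. replace (Nat.leb (m + S i) (S V)) with true by (symmetry; apply Nat.leb_le; lia).
      replace (m + S i - 1)%nat with (m + i)%nat by lia. rewrite pow_add. ring.
    - unfold Tail. rewrite <- Series_scal_r. apply Series_ext. intros k.
      unfold F, Act. replace (Nat.leb (S V - i + k + S i) (S V)) with false by (symmetry; apply Nat.leb_gt; lia).
      replace (S V - i + k + S i - S V + 1)%nat with (S (S k)) by lia.
      replace (S V + k)%nat with ((S V - i + k) + i)%nat by lia. rewrite (pow_add (1 - p) (S V - i + k) i). ring. }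
  rewrite decomp_sum by lia. simpl Init.Nat.pred.
  rewrite (sum_eq _ (fun i => sum_f_R0 (fun m => G (m + S i)%nat) (V - i) + Tail)) by exact Hterm.
  rewrite sum_plus, tri_sum, sum_cte.
  unfold T_inf.
  rewrite (fsum_ext (fun k => p ^ 2 * (1 - p) ^ (k - 1) * (INR k / 2) * log2 (1 + g * (B / INR k)))
             (fun k => INR k * G k)).
  2: { intros k Hk. unfold G, rate. field. }
  assert (H2 : Series (fun n => p * (1 - p) ^ (S n + S V - 1) * (/ 2 * log2 (1 + g * xi B A (S n))))
     = Sser p (fun m => F g B (S V) A m 0) * Pd p (S V) 0).
  { unfold Sser, Pd. rewrite <- Series_scal_r. apply Series_ext. intros n.
    unfold F, Act, xi, rate. replace (S n + S V - 1)%nat with (n + S V)%nat by lia.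
    rewrite pow_add. ring. }
  assert (H3 : Series (fun n => p ^ 2 * (1 - p) ^ (S n + S V - 1) * (INR (S V) / 2)
                 * log2 (1 + g * ((B - fsum (xi B A) (S n)) / INR (S V))))
     = Tail * INR (S V)).
  { unfold Tail. rewrite <- Series_scal_r. apply Series_ext. intros n.
    rewrite xib_fsum. unfold rate. replace (S n + S V - 1)%nat with (S V + n)%nat by lia.
    field. }
  rewrite H2, H3. ring.
Qed.
End S.

Theorem lemma1 (p g B : R) (w : nat) (A : R -> R) :
  0 < p < 1 -> 0 < g -> 0 < B -> (1 <= w)%nat ->
  (forall b, 0 <= b <= B -> 0 <= A b <= b) ->
  LimInf_seq (fun n => throughput p g w (stat_policy B w A) (S n))
    = Gamma_star p g B w ->
  Gamma_star p g B w = Finite (T_inf p g B w (xi B A)).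
Proof.
  intros Hp Hg HB Hw HA H. rewrite <- H.
  rewrite <- (Lval_eq p g B w A Hp Hg HB Hw HA).
  apply is_LimInf_seq_unique, is_lim_LimInf_seq.
  assert (HU : is_lim_seq (fun k => U p g B w A (S k)) (Lval p g B w A)).
  { unfold U, Lval.
    apply (lim_sumf (fun d k => agesum p (S k) (fun m => F g B w A m d) * Pd p w d)
                    (fun d => Sser p (fun m => F g B w A m d) * Pd p w d)).
    intros d Hd.
    apply (is_lim_seq_scal_r _ (Pd p w d) (Sser p (fun m => F g B w A m d))).
    apply (agesum_lim p Hp _ (rate g B)). intros m. apply F_bnd; assumption. }
  apply is_lim_seq_Reals in HU. apply Cesaro_1 in HU. apply is_lim_seq_Reals in HU.
  apply is_lim_seq_incr_1 in HU.
  apply (is_lim_seq_ext _ _ _ ltac:(intros n; simpl Init.Nat.pred; symmetry; apply (throughput_eq p g B w A HB Hw HA)) HU).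
Qed.
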